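(* Let $\tau>\tau_0>0$, $\gamma>0$, $f:[0,\infty)\to[0,\infty)$ continuous, and $\mathcal D,T$ as in the context. Then for every $u\in\mathcal D$, the function $t\mapsto(Tu)(t)$ is continuously differentiable on $[-\tau,0]$ (with one-sided derivatives at the endpoints).
   Context: For $u\in C([-\tau,0],[0,\infty))$ let $H_0(u)=u(0)-\int_{\tau_0}^{\tau}f(u(-a))e^{-\gamma(a-\tau_0)}da$, and $\mathcal D=\{u\in C([-\tau,0],[0,\infty)) : H_0(u)\ge0\}$. For $u\in\mathcal D$ define $Tu\in C([-\tau,0],[0,\infty))$ by $$(Tu)(t)=e^{-\gamma(t+\tau)}H_0(u)+\int_{\tau_0}^{\tau}f(u(t+\tau-a))e^{-\gamma(a-\tau_0)}da,\quad t\in[-\tau,\tau_0-\tau],$$ $$(Tu)(t)=e^{-\gamma(t+\tau)}H_0(u)+\int_{\tau_0}^{t+\tau}f((Tu)(t-a))e^{-\gamma(a-\tau_0)}da+\int_{t+\tau}^{\tau}f(u(t+\tau-a))e^{-\gamma(a-\tau_0)}da,\quad t\in(\tau_0-\tau,0]$$ (the second formula determines $Tu$ successively, since it only uses values of $Tu$ at points $t-a\le t-\tau_0$). *)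

(* Defs.v *)
From Stdlib Require Import Reals Lra ClassicalEpsilon.
Open Scope R_scope.

(* Total Riemann integral: the Stdlib Riemann integral when [f] is
   Riemann-integrable on [a,b] (value independent of the proof, RiemannInt_P5),
   and 0 otherwise. Only used for integrands that are continuous. *)
Definition RInt (f : R -> R) (a b : R) : R :=
  match excluded_middle_informative (inhabited (Riemann_integrable f a b)) with
  | left H => RiemannInt (epsilon H (fun _ => True))
  | right _ => 0
  end.

Definition cont_on (D : R -> Prop) (f : R -> R) : Prop :=
  forall x, D x -> forall eps, 0 < eps -> exists delta, 0 < delta /\
    forall y, D y -> Rabs (y - x) < delta -> Rabs (f y - f x) < eps.

(* g is the derivative of f on D, relative to D (one-sided at endpoints of an interval) *)
Definition deriv_on (D : R -> Prop) (f g : R -> R) : Prop :=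
  forall x, D x -> forall eps, 0 < eps -> exists delta, 0 < delta /\
    forall h, h <> 0 -> D (x + h) -> Rabs h < delta ->
      Rabs ((f (x + h) - f x) / h - g x) < eps.

Definition C1_on (D : R -> Prop) (f : R -> R) : Prop :=
  exists g, deriv_on D f g /\ cont_on D g.

Definition Icc (a b : R) (x : R) : Prop := a <= x <= b.
Definition Ici0 (x : R) : Prop := 0 <= x.

Definition H0 (f : R -> R) (gamma tau0 tau : R) (u : R -> R) : R :=
  u 0 - RInt (fun a => f (u (- a)) * exp (- gamma * (a - tau0))) tau0 tau.

Definition is_Tu (f : R -> R) (gamma tau0 tau : R) (u v : R -> R) : Prop :=
  (forall t, - tau <= t <= tau0 - tau ->
     v t = exp (- gamma * (t + tau)) * H0 f gamma tau0 tau u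
           + RInt (fun a => f (u (t + tau - a)) * exp (- gamma * (a - tau0))) tau0 tau)
  /\
  (forall t, tau0 - tau < t <= 0 ->
     v t = exp (- gamma * (t + tau)) * H0 f gamma tau0 tau u
           + RInt (fun a => f (v (t - a)) * exp (- gamma * (a - tau0))) tau0 (t + tau)
           + RInt (fun a => f (u (t + tau - a)) * exp (- gamma * (a - tau0))) (t + tau) tau).

(* Main.v *)
Require Import Defs.
From Stdlib Require Import Reals Lra ClassicalEpsilon FunctionalExtensionality.
From Coquelicot Require Import Coquelicot.
Open Scope R_scope.


Lemma cont_of_eps (g : R -> R) x :
  (forall eps, 0 < eps -> exists delta, 0 < delta /\
     forall y, Rabs (y - x) < delta -> Rabs (g y - g x) < eps) -> continuous g x.
Proof.
  intros H. apply continuity_pt_filterlim.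
  intros eps Heps. destruct (H eps Heps) as [d [Hd Hy]].
  exists d. split; auto. intros y [_ Hy']. apply Hy. exact Hy'.
Qed.

Lemma eps_of_cont (g : R -> R) x : continuous g x ->
  forall eps, 0 < eps -> exists delta, 0 < delta /\
     forall y, Rabs (y - x) < delta -> Rabs (g y - g x) < eps.
Proof.
  intros H. apply continuity_pt_filterlim in H.
  intros eps Heps. destruct (H eps Heps) as [d [Hd Hy]].
  exists d. split; auto. intros y Hy'.
  destruct (Req_dec y x) as [->|Hne].
  - unfold Rminus; rewrite Rplus_opp_r, Rabs_R0; auto.
  - apply Hy. split; [split; [exact I| auto] | exact Hy'].
Qed.

Lemma RInt_conv (g gb : R -> R) a b : a <= b -> (forall x, a <= x <= b -> g x = gb x) ->
  (forall x, continuous gb x) -> Defs.RInt g a b = RInt gb a b.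
Proof.
  intros Hab Hag Hc.
  assert (exb : ex_RInt gb a b) by (apply (ex_RInt_continuous (V:=R_CompleteNormedModule)); auto).
  assert (exg : ex_RInt g a b).
  { apply (ex_RInt_ext gb); auto. intros x Hx.
    rewrite Rmin_left in Hx by lra. rewrite Rmax_right in Hx by lra.
    symmetry; apply Hag; lra. }
  pose proof (ex_RInt_Reals_0 _ _ _ exg) as pr.
  unfold Defs.RInt. destruct excluded_middle_informative as [Hi|Hi].
  - rewrite <- RInt_Reals. apply RInt_ext. intros x Hx.
    rewrite Rmin_left in Hx by lra. rewrite Rmax_right in Hx by lra.
    apply Hag; lra.
  - exfalso; apply Hi; exact (inhabits pr).
Qed.

Definition C1g (F dF : R -> R) := forall x, is_derive F x (dF x) /\ continuous dF x.

Lemma C1g_ext F dF F' dF' : C1g F dF -> (forall x, F x = F' x) -> (forall x, dF x = dF' x) ->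
  C1g F' dF'.
Proof.
  intros H HF HdF x. destruct (H x) as [H1 H2]. split.
  - rewrite <- HdF. apply (is_derive_ext F); auto.
  - apply (continuous_ext dF); auto.
Qed.

Lemma C1g_plus F dF G dG : C1g F dF -> C1g G dG ->
  C1g (fun x => F x + G x) (fun x => dF x + dG x).
Proof.
  intros H1 H2 x. destruct (H1 x); destruct (H2 x). split.
  - apply (is_derive_plus F G); auto.
  - apply (continuous_plus dF dG); auto.
Qed.

Lemma C1g_mult F dF G dG : C1g F dF -> C1g G dG ->
  C1g (fun x => F x * G x) (fun x => dF x * G x + F x * dG x).
Proof.
  intros H1 H2 x. destruct (H1 x) as [a b]; destruct (H2 x) as [c d]. split.
  - apply (is_derive_mult F G); auto. intros; apply Rmult_comm.
  - apply (continuous_plus (K:=R_AbsRing) (V:=R_NormedModule) (fun x => dF x * G x) (fun x => F x * dG x)).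
    + apply (continuous_mult (K:=R_AbsRing) dF G); auto. apply (ex_derive_continuous (K:=R_AbsRing) (V:=R_NormedModule)). eexists; eauto.
    + apply (continuous_mult (K:=R_AbsRing) F dG); auto. apply (ex_derive_continuous (K:=R_AbsRing) (V:=R_NormedModule)). eexists; eauto.
Qed.

Lemma C1g_const c : C1g (fun _ => c) (fun _ => 0).
Proof. intros x. split. apply (is_derive_const c). apply continuous_const. Qed.

Lemma C1g_shift F dF c : C1g F dF -> C1g (fun x => F (x + c)) (fun x => dF (x + c)).
Proof.
  intros H x. destruct (H (x + c)) as [a b]. split.
  - pose proof (is_derive_comp F (fun x => x + c) x (dF (x + c)) 1 a) as K.
    assert (is_derive (fun x => x + c) x 1).
    { auto_derive; auto. }
    specialize (K H0). unfold scal in K; simpl in K. unfold mult in K; simpl in K.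
    rewrite Rmult_1_l in K. exact K.
  - apply (continuous_comp (fun x => x + c) dF); auto.
    apply (continuous_plus (K:=R_AbsRing) (V:=R_NormedModule) (fun x => x) (fun _ => c)). apply continuous_id. apply continuous_const.
Qed.

Lemma C1g_exp k c : C1g (fun t => exp (k * (t + c))) (fun t => k * exp (k * (t + c))).
Proof.
  intros x. split.
  - auto_derive; auto. ring.
  - apply (continuous_mult (K:=R_AbsRing) (fun _ => k) (fun t => exp (k * (t + c)))).
    apply continuous_const. apply continuous_exp_comp.
    apply (continuous_mult (K:=R_AbsRing) (fun _ => k) (fun t => t + c)). apply continuous_const.
    apply (continuous_plus (K:=R_AbsRing) (V:=R_NormedModule) (fun x => x) (fun _ => c)). apply continuous_id. apply continuous_const.
Qed.

Lemma C1g_Phi (G : R -> R) : (forall x, continuous G x) -> C1g (fun x => RInt G 0 x) G.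
Proof.
  intros H x. split; auto.
  apply is_derive_RInt with 0; auto.
  apply filter_forall. intros y. apply (RInt_correct (V:=R_CompleteNormedModule)). apply (ex_RInt_continuous (V:=R_CompleteNormedModule)); auto.
Qed.
Lemma RInt_diff (G : R -> R) x y : (forall z, continuous G z) ->
  RInt G x y = RInt G 0 y - RInt G 0 x.
Proof.
  intros H.
  assert (E : forall a b, ex_RInt G a b) by (intros; apply (ex_RInt_continuous (V:=R_CompleteNormedModule)); auto).
  pose proof (RInt_Chasles G 0 x y (E _ _) (E _ _)) as K.
  unfold plus in K; simpl in K. lra.
Qed.

Lemma subst_lem (F : R -> R) gam tau0 c p q : (forall x, continuous F x) ->
  RInt (fun a => F (c - a) * exp (- gam * (a - tau0))) p q =
  exp (- gam * (c - tau0)) * (RInt (fun s => F s * exp (gam * s)) 0 (c - p)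
                             - RInt (fun s => F s * exp (gam * s)) 0 (c - q)).
Proof.
  intros HF.
  set (Gf := fun s => F s * exp (gam * s)).
  assert (cG : forall x, continuous Gf x).
  { intros x. unfold Gf. apply (continuous_mult (K:=R_AbsRing) F (fun s => exp (gam * s))); auto.
    apply continuous_exp_comp. apply (continuous_mult (K:=R_AbsRing) (fun _ => gam) (fun s => s)).
    apply continuous_const. apply continuous_id. }
  assert (E : forall a b, ex_RInt Gf a b) by (intros; apply (ex_RInt_continuous (V:=R_CompleteNormedModule)); auto).
  rewrite (RInt_ext _ (fun a => scal (- exp (- gam * (c - tau0))) (scal (-1) (Gf (-1 * a + c))))).
  2:{ intros x _. unfold scal; simpl; unfold mult; simpl. unfold Gf.
      replace (-1 * x + c) with (c - x) by ring.
      replace (exp (- gam * (x - tau0))) with (exp (- gam * (c - tau0)) * exp (gam * (c - x))).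
      ring. rewrite <- exp_plus. f_equal. ring. }
  transitivity (scal (- exp (- gam * (c - tau0))) (RInt (fun a => scal (-1) (Gf (-1 * a + c))) p q)).
  { apply (RInt_scal (V:=R_CompleteNormedModule)). apply (ex_RInt_comp_lin Gf). apply E. }
  transitivity (scal (- exp (- gam * (c - tau0))) (RInt Gf (-1 * p + c) (-1 * q + c))).
  { f_equal. apply (RInt_comp_lin (V:=R_CompleteNormedModule)). apply E. }
  rewrite (RInt_diff Gf) by auto.
  unfold scal; simpl; unfold mult; simpl.
  replace (-1 * p + c) with (c - p) by ring. replace (-1 * q + c) with (c - q) by ring.
  unfold Gf. ring.
Qed.
Lemma glue (A dA B dB : R -> R) t0 : C1g A dA -> C1g B dB -> A t0 = B t0 -> dA t0 = dB t0 ->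
  forall x, derivable_pt_lim (fun t => if Rle_dec t t0 then A t else B t) x
                             (if Rle_dec x t0 then dA x else dB x)
   /\ continuous (fun t => if Rle_dec t t0 then dA t else dB t) x.
Proof.
  intros HA HB E0 E1 x.
  destruct (HA x) as [hA cA]; destruct (HB x) as [hB cB].
  apply is_derive_Reals in hA. apply is_derive_Reals in hB.
  pose proof (eps_of_cont _ _ cA) as cA'. pose proof (eps_of_cont _ _ cB) as cB'.
  destruct (Rtotal_order x t0) as [Hlt|[Heq|Hgt]].
  - destruct (Rle_dec x t0) as [_|n]; [|lra].
    split.
    + intros eps Heps. destruct (hA eps Heps) as [d Hd].
      assert (Hp : 0 < Rmin d (t0 - x)) by (apply Rmin_pos; [apply cond_pos|lra]).
      exists (mkposreal _ Hp). intros h Hh Hl. simpl in Hl.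
      pose proof (Rmin_l d (t0 - x)). pose proof (Rmin_r d (t0 - x)).
      pose proof (Rle_abs h).
      cbv beta. destruct (Rle_dec (x + h) t0); destruct (Rle_dec x t0); try lra.
      apply Hd; auto; lra.
    + apply cont_of_eps. intros eps Heps. destruct (cA' eps Heps) as [d [Hd0 Hd]].
      exists (Rmin d (t0 - x)). split; [apply Rmin_pos; lra|].
      intros y Hy. cbv beta. pose proof (Rmin_l d (t0 - x)). pose proof (Rmin_r d (t0 - x)).
      pose proof (Rle_abs (y - x)).
      destruct (Rle_dec y t0) as [_|n]; [|lra]. destruct (Rle_dec x t0) as [_|n]; [|lra].
      apply Hd; lra.
  - subst x. destruct (Rle_dec t0 t0) as [_|n]; [|lra].
    split.
    + intros eps Heps. destruct (hA eps Heps) as [d1 Hd1]. destruct (hB eps Heps) as [d2 Hd2].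
      assert (Hp : 0 < Rmin d1 d2) by (apply Rmin_pos; apply cond_pos).
      exists (mkposreal _ Hp). intros h Hh Hl. simpl in Hl.
      pose proof (Rmin_l d1 d2). pose proof (Rmin_r d1 d2).
      cbv beta. destruct (Rle_dec t0 t0) as [_|n]; [|lra]. destruct (Rle_dec (t0 + h) t0).
      * apply Hd1; auto; lra.
      * rewrite E0, E1. apply Hd2; auto; lra.
    + apply cont_of_eps. intros eps Heps.
      destruct (cA' eps Heps) as [d1 [Hd01 Hd1]]. destruct (cB' eps Heps) as [d2 [Hd02 Hd2]].
      exists (Rmin d1 d2). split; [apply Rmin_pos; lra|].
      intros y Hy. cbv beta. pose proof (Rmin_l d1 d2). pose proof (Rmin_r d1 d2).
      destruct (Rle_dec t0 t0) as [_|n]; [|lra].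
      destruct (Rle_dec y t0).
      * apply Hd1; lra.
      * rewrite E1. apply Hd2; lra.
  - destruct (Rle_dec x t0) as [n|_]; [lra|].
    split.
    + intros eps Heps. destruct (hB eps Heps) as [d Hd].
      assert (Hp : 0 < Rmin d (x - t0)) by (apply Rmin_pos; [apply cond_pos|lra]).
      exists (mkposreal _ Hp). intros h Hh Hl. simpl in Hl.
      pose proof (Rmin_l d (x - t0)). pose proof (Rmin_r d (x - t0)).
      pose proof (Rle_abs (- h)). rewrite Rabs_Ropp in H1.
      cbv beta. destruct (Rle_dec (x + h) t0); destruct (Rle_dec x t0); try lra.
      apply Hd; auto; lra.
    + apply cont_of_eps. intros eps Heps. destruct (cB' eps Heps) as [d [Hd0 Hd]].
      exists (Rmin d (x - t0)). split; [apply Rmin_pos; lra|].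
      intros y Hy. cbv beta. pose proof (Rmin_l d (x - t0)). pose proof (Rmin_r d (x - t0)).
      pose proof (Rle_abs (- (y - x))). rewrite Rabs_Ropp in H1.
      destruct (Rle_dec y t0) as [n|_]; [lra|]. destruct (Rle_dec x t0) as [n|_]; [lra|].
      apply Hd; lra.
Qed.

Lemma clamp_lip a b x y : a <= b -> Rabs (Rmax a (Rmin b y) - Rmax a (Rmin b x)) <= Rabs (y - x).
Proof. intros. unfold Rmax, Rmin; repeat destruct Rle_dec; unfold Rabs; repeat destruct Rcase_abs; lra. Qed.

Lemma clamp_in a b x : a <= b -> a <= Rmax a (Rmin b x) <= b.
Proof. intros. unfold Rmax, Rmin; repeat destruct Rle_dec; lra. Qed.

Lemma clamp_id a b x : a <= x <= b -> Rmax a (Rmin b x) = x.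
Proof. intros. unfold Rmax, Rmin; repeat destruct Rle_dec; lra. Qed.

Lemma clamp_cont (w : R -> R) a b : a <= b -> cont_on (Icc a b) w ->
  forall x, continuous (fun x => w (Rmax a (Rmin b x))) x.
Proof.
  intros Hab Hw x. apply cont_of_eps. intros eps Heps.
  destruct (Hw (Rmax a (Rmin b x)) (clamp_in a b x Hab) eps Heps) as [d [Hd0 Hd]].
  exists d. split; auto. intros y Hy. cbv beta.
  apply Hd. apply clamp_in; auto. pose proof (clamp_lip a b x y Hab). lra.
Qed.

Lemma comp_cont (f g : R -> R) : cont_on Ici0 f -> (forall x, 0 <= g x) ->
  (forall x, continuous g x) -> forall x, continuous (fun x => f (g x)) x.
Proof.
  intros Hf Hg0 Hg x. apply cont_of_eps. intros eps Heps.
  destruct (Hf (g x) (Hg0 x) eps Heps) as [d1 [Hd1 H1]].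
  destruct (eps_of_cont g x (Hg x) d1 Hd1) as [d2 [Hd2 H2]].
  exists d2. split; auto. intros y Hy. cbv beta. apply H1. apply Hg0. apply H2; auto.
Qed.

Lemma integrand_cont (F : R -> R) gam tau0 c : (forall x, continuous F x) ->
  forall a, continuous (fun a => F (c - a) * exp (- gam * (a - tau0))) a.
Proof.
  intros HF a.
  apply (continuous_mult (K:=R_AbsRing) (fun a => F (c - a)) (fun a => exp (- gam * (a - tau0)))).
  - apply (continuous_comp (fun a => c - a) F); auto.
    apply (continuous_minus (K:=R_AbsRing) (V:=R_NormedModule) (fun _ => c) (fun a => a)).
    apply continuous_const. apply continuous_id.
  - apply continuous_exp_comp.
    apply (continuous_mult (K:=R_AbsRing) (fun _ => - gam) (fun a => a - tau0)).
    apply continuous_const.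
    apply (continuous_minus (K:=R_AbsRing) (V:=R_NormedModule) (fun a => a) (fun _ => tau0)).
    apply continuous_id. apply continuous_const.
Qed.


Theorem lemma4 (tau tau0 gamma : R) (f u v : R -> R)
  (Htau0 : 0 < tau0) (Htau : tau0 < tau) (Hgamma : 0 < gamma)
  (Hf_cont : cont_on Ici0 f) (Hf_pos : forall x, 0 <= x -> 0 <= f x)
  (Hu_cont : cont_on (Icc (- tau) 0) u)
  (Hu_pos : forall t, - tau <= t <= 0 -> 0 <= u t)
  (HuD : 0 <= H0 f gamma tau0 tau u)
  (Hv_cont : cont_on (Icc (- tau) 0) v)
  (Hv_pos : forall t, - tau <= t <= 0 -> 0 <= v t)
  (HvT : is_Tu f gamma tau0 tau u v) :
  C1_on (Icc (- tau) 0) v.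
Proof.
  destruct HvT as [HT1 HT2].
  assert (Hab : - tau <= 0) by lra.
  pose (ub := fun x => u (Rmax (- tau) (Rmin 0 x))).
  pose (vb := fun x => v (Rmax (- tau) (Rmin 0 x))).
  assert (cF : forall x, continuous (fun x => f (ub x)) x).
  { apply comp_cont; auto. intros x; apply Hu_pos, clamp_in; auto.
    apply clamp_cont; auto. }
  assert (cFV : forall x, continuous (fun x => f (vb x)) x).
  { apply comp_cont; auto. intros x; apply Hv_pos, clamp_in; auto.
    apply clamp_cont; auto. }
  pose (G := fun s => f (ub s) * exp (gamma * s)).
  pose (GV := fun s => f (vb s) * exp (gamma * s)).
  assert (cG : forall x, continuous G x).
  { intros x. unfold G. apply (continuous_mult (K:=R_AbsRing) (fun s => f (ub s)) (fun s => exp (gamma * s))); auto.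
    apply continuous_exp_comp. apply (continuous_mult (K:=R_AbsRing) (fun _ => gamma) (fun s => s)).
    apply continuous_const. apply continuous_id. }
  assert (cGV : forall x, continuous GV x).
  { intros x. unfold GV. apply (continuous_mult (K:=R_AbsRing) (fun s => f (vb s)) (fun s => exp (gamma * s))); auto.
    apply continuous_exp_comp. apply (continuous_mult (K:=R_AbsRing) (fun _ => gamma) (fun s => s)).
    apply continuous_const. apply continuous_id. }
  pose proof (C1g_Phi G cG) as PG.
  pose proof (C1g_Phi GV cGV) as PGV.
  set (H := H0 f gamma tau0 tau u) in *.
  pose proof (C1g_plus _ _ _ _
      (C1g_mult _ _ _ _ (C1g_exp (- gamma) tau) (C1g_const H))
      (C1g_mult _ _ _ _ (C1g_exp (- gamma) (tau - tau0))
         (C1g_plus _ _ _ _ (C1g_shift _ _ (tau - tau0) PG)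
                           (C1g_mult _ _ _ _ (C1g_const (-1)) PG)))) as HA.
  pose proof (C1g_plus _ _ _ _
      (C1g_plus _ _ _ _
        (C1g_mult _ _ _ _ (C1g_exp (- gamma) tau) (C1g_const H))
        (C1g_mult _ _ _ _ (C1g_exp (- gamma) (- tau0))
           (C1g_plus _ _ _ _ (C1g_shift _ _ (- tau0) PGV)
                             (C1g_mult _ _ _ _ (C1g_const (-1)) (C1g_const (RInt GV 0 (- tau)))))))
      (C1g_mult _ _ _ _ (C1g_exp (- gamma) (tau - tau0))
         (C1g_plus _ _ _ _ (C1g_const (RInt G 0 0))
                           (C1g_mult _ _ _ _ (C1g_const (-1)) PG)))) as HB.
  cbv beta in HA, HB.
  match type of HA with C1g ?a ?b => set (A := a) in HA; set (dA := b) in HA end.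
  match type of HB with C1g ?a ?b => set (B := a) in HB; set (dB := b) in HB end.
  set (t0 := tau0 - tau).
  assert (Hvu : v (- tau) = u 0).
  { rewrite (HT1 (- tau)) by lra. unfold H, H0.
    replace (- tau + tau) with 0 by ring.
    assert (EE : (fun a => f (u (0 - a)) * exp (- gamma * (a - tau0)))
               = (fun a => f (u (- a)) * exp (- gamma * (a - tau0)))).
    { apply functional_extensionality; intros a. replace (0 - a) with (- a) by ring. reflexivity. }
    rewrite EE, Rmult_0_r, exp_0. ring. }
  assert (E0 : A t0 = B t0).
  { unfold A, B, t0. cbv beta.
    replace (tau0 - tau + (tau - tau0)) with 0 by ring.
    replace (tau0 - tau + - tau0) with (- tau) by ring. ring. }
  assert (E1 : dA t0 = dB t0).
  { unfold dA, dB, t0. cbv beta.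
    replace (tau0 - tau + (tau - tau0)) with 0 by ring.
    replace (tau0 - tau + - tau0) with (- tau) by ring.
    unfold G, GV, ub, vb. rewrite !clamp_id by lra. rewrite Hvu.
    assert (K : exp (- gamma * - tau) * exp (gamma * - tau) = 1).
    { rewrite <- exp_plus. replace (- gamma * - tau + gamma * - tau) with 0 by ring. apply exp_0. }
    rewrite !Rmult_0_r, !exp_0.
    assert (K' : exp (- gamma * - tau) * (f (u 0) * exp (gamma * - tau)) = f (u 0)).
    { rewrite (Rmult_comm (f (u 0))), <- Rmult_assoc, K; ring. }
    lra. }
  pose proof (glue A dA B dB t0 HA HB E0 E1) as Hg.
  assert (vW : forall t, - tau <= t <= 0 -> v t = (if Rle_dec t t0 then A t else B t)).
  { intros t Ht. destruct (Rle_dec t t0) as [Hle|Hgt].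
    - unfold t0 in Hle. rewrite HT1 by lra.
      rewrite (RInt_conv _ (fun a => f (ub (t + tau - a)) * exp (- gamma * (a - tau0)))).
      2: lra.
      2: { intros a Ha. unfold ub. rewrite clamp_id by lra. reflexivity. }
      2: apply (integrand_cont (fun s => f (ub s))); auto.
      pose proof (subst_lem (fun s => f (ub s)) gamma tau0 (t + tau) tau0 tau cF) as K.
      cbv beta in K. rewrite K. unfold A, G. cbv beta.
      replace (t + tau - tau0) with (t + (tau - tau0)) by ring.
      replace (t + tau - tau) with t by ring. ring.
    - unfold t0 in Hgt. rewrite HT2 by lra.
      rewrite (RInt_conv _ (fun a => f (vb (t - a)) * exp (- gamma * (a - tau0)))).
      2: lra.
      2: { intros a Ha. unfold vb. rewrite clamp_id by lra. reflexivity. }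
      2: apply (integrand_cont (fun s => f (vb s))); auto.
      rewrite (RInt_conv _ (fun a => f (ub (t + tau - a)) * exp (- gamma * (a - tau0)))).
      2: lra.
      2: { intros a Ha. unfold ub. rewrite clamp_id by lra. reflexivity. }
      2: apply (integrand_cont (fun s => f (ub s))); auto.
      pose proof (subst_lem (fun s => f (vb s)) gamma tau0 t tau0 (t + tau) cFV) as K1.
      pose proof (subst_lem (fun s => f (ub s)) gamma tau0 (t + tau) (t + tau) tau cF) as K2.
      cbv beta in K1, K2. rewrite K1, K2. unfold B, G, GV. cbv beta.
      replace (t + tau - tau0) with (t + (tau - tau0)) by ring.
      replace (t - tau0) with (t + - tau0) by ring.
      replace (t - (t + tau)) with (- tau) by ring.
      replace (t + tau - (t + tau)) with 0 by ring.
      replace (t + tau - tau) with t by ring. ring. }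
  exists (fun t => if Rle_dec t t0 then dA t else dB t). split.
  - intros x Hx eps Heps. destruct (Hg x) as [Hd _]. destruct (Hd eps Heps) as [d Hdd].
    exists d; split; [apply cond_pos|]. intros h Hh Hxh Hl.
    rewrite (vW x Hx), (vW (x + h) Hxh). apply Hdd; auto.
  - intros x Hx eps Heps. destruct (Hg x) as [_ Hc].
    destruct (eps_of_cont _ _ Hc eps Heps) as [d [Hd0 Hd]].
    exists d; split; [exact Hd0|]. intros y _ Hy. apply Hd; auto.
Qed.
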